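(* The automorphic growth of Thompson's group $V$ is exponential.
   Context: Let $\mathfrak{C}=\{0,1\}^\omega$ be the Cantor space with the product topology. For $w_1,w_2\in\{0,1\}^*$, a homeomorphism maps $w_1\mathfrak{C}$ rigidly to $w_2\mathfrak{C}$ if it restricts to $w_1y\mapsto w_2y$. Thompson's group $V$ is the group of homeomorphisms $v$ of $\mathfrak{C}$ such that every $x\in\mathfrak{C}$ lies in a cone $w\mathfrak{C}$ that $v$ maps rigidly onto some cone; $V$ is finitely generated. For a finitely generated group $G$ with finite generating set $\Sigma$, the automorphic growth function sends $n$ to the number of $\operatorname{Aut}(G)$-orbits of $G$ containing an element of word length at most $n$. Exponential means it is $\sim$-equivalent to $n\mapsto 2^n$, where $f\sim g$ iff $f\preccurlyeq g$ and $g\preccurlyeq f$, and $f\preccurlyeq g$ means there is $\lambda\in\mathbb{N}\setminus\{0\}$ with $f(n)\le\lambda g(\lambda n+\lambda)+\lambda$ for all $n$. *)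

(* Defs.v *)
From Stdlib Require Import Arith List Lia ClassicalEpsilon.
Import ListNotations.

Definition Cantor := nat -> bool.

Definition in_cone (w : list bool) (x : Cantor) : Prop :=
  forall i, i < length w -> x i = nth i w false.

Definition cat_word (w : list bool) (y : Cantor) : Cantor :=
  fun i => if i <? length w then nth i w false else y (i - length w).

Definition maps_rigidly (f : Cantor -> Cantor) (w1 w2 : list bool) : Prop :=
  forall y, f (cat_word w1 y) = cat_word w2 y.

(* continuity for the product topology (bool discrete) *)
Definition continuous_C (f : Cantor -> Cantor) : Prop :=
  forall x n, exists m, forall y, (forall i, i < m -> y i = x i) ->
    forall i, i < n -> f y i = f x i.

Definition homeomorphism_C (f : Cantor -> Cantor) : Prop :=
  exists g : Cantor -> Cantor,
    (forall x, g (f x) = x) /\ (forall x, f (g x) = x) /\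
    continuous_C f /\ continuous_C g.

Definition inV (v : Cantor -> Cantor) : Prop :=
  homeomorphism_C v /\
  forall x, exists w1 w2, in_cone w1 x /\ maps_rigidly v w1 w2.

Definition compose (a b : Cantor -> Cantor) : Cantor -> Cantor := fun x => a (b x).
Definition idC : Cantor -> Cantor := fun x => x.

Definition is_autV (phi : (Cantor -> Cantor) -> (Cantor -> Cantor)) : Prop :=
  (forall a, inV a -> inV (phi a)) /\
  (forall a b, inV a -> inV b -> phi a = phi b -> a = b) /\
  (forall b, inV b -> exists a, inV a /\ phi a = b) /\
  (forall a b, inV a -> inV b -> phi (compose a b) = compose (phi a) (phi b)).

Definition aut_equiv (a b : Cantor -> Cantor) : Prop :=
  exists phi, is_autV phi /\ phi a = b.

(* words over Sigma ∪ Sigma^{-1}: letter (i, true) = Sigma_i, (i, false) = Sigma_i^{-1} *)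
Inductive evals (Sigma : list (Cantor -> Cantor)) :
  list (nat * bool) -> (Cantor -> Cantor) -> Prop :=
| evals_nil : evals Sigma [] idC
| evals_pos : forall i w v, i < length Sigma -> evals Sigma w v ->
    evals Sigma ((i, true) :: w) (compose (nth i Sigma idC) v)
| evals_neg : forall i w v t, i < length Sigma -> evals Sigma w v ->
    compose t (nth i Sigma idC) = idC -> compose (nth i Sigma idC) t = idC ->
    evals Sigma ((i, false) :: w) (compose t v).

Definition generatesV (Sigma : list (Cantor -> Cantor)) : Prop :=
  (forall s, In s Sigma -> inV s) /\
  (forall v, inV v -> exists w, evals Sigma w v).

Definition in_ball (Sigma : list (Cantor -> Cantor)) (n : nat) (v : Cantor -> Cantor) : Prop :=
  exists w, length w <= n /\ evals Sigma w v.

(* k is the number of Aut(V)-orbits containing an element of the n-ball: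
   L is a list of representatives, one for each such orbit *)
Definition orbit_count (Sigma : list (Cantor -> Cantor)) (n k : nat) : Prop :=
  exists L : list (Cantor -> Cantor),
    length L = k /\
    (forall a, In a L -> in_ball Sigma n a) /\
    (forall i j, i < length L -> j < length L -> i <> j ->
       ~ aut_equiv (nth i L idC) (nth j L idC)) /\
    (forall v, in_ball Sigma n v -> exists a, In a L /\ aut_equiv v a).

(* automorphic growth function (well defined: such k exists and is unique) *)
Definition aut_growth (Sigma : list (Cantor -> Cantor)) (n : nat) : nat :=
  epsilon (inhabits 0) (orbit_count Sigma n).

Definition growth_le (f g : nat -> nat) : Prop :=
  exists lam, lam <> 0 /\ forall n, f n <= lam * g (lam * n + lam) + lam.

Definition growth_equiv (f g : nat -> nat) : Prop := growth_le f g /\ growth_le g f.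

Definition exponential (f : nat -> nat) : Prop := growth_equiv f (fun n => 2 ^ n).

(* Main.v *)
Require Import Defs.
From Stdlib Require Import Arith List Lia ClassicalEpsilon FunctionalExtensionality Classical.
Import ListNotations.

Definition shift (k : nat) (x : Cantor) : Cantor := fun i => x (k + i).

Lemma cat_in_cone w y : in_cone w (cat_word w y).
Proof. intros i Hi. unfold cat_word. apply Nat.ltb_lt in Hi. rewrite Hi. reflexivity. Qed.

Lemma cone_cat w x : in_cone w x -> x = cat_word w (shift (length w) x).
Proof. intros H. apply functional_extensionality. intro i. unfold cat_word, shift.
  destruct (i <? length w) eqn:E.
  - apply Nat.ltb_lt in E. apply H; auto.
  - apply Nat.ltb_ge in E. f_equal. lia. Qed.

Lemma cat_app u v y : cat_word (u ++ v) y = cat_word u (cat_word v y).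
Proof. apply functional_extensionality; intro i. unfold cat_word. rewrite length_app.
  destruct (i <? length u) eqn:E1.
  - apply Nat.ltb_lt in E1. assert (H: i <? length u + length v = true) by (apply Nat.ltb_lt; lia). rewrite H. apply app_nth1; auto.
  - apply Nat.ltb_ge in E1. rewrite app_nth2 by auto.
    destruct (i - length u <? length v) eqn:E2.
    + apply Nat.ltb_lt in E2. assert (H: i <? length u + length v = true) by (apply Nat.ltb_lt; lia). rewrite H; auto.
    + apply Nat.ltb_ge in E2. assert (H: i <? length u + length v = false) by (apply Nat.ltb_ge; lia). rewrite H. f_equal; lia.
Qed.

Lemma cone_prefix u v x : in_cone u x -> in_cone v x -> length u <= length v -> v = u ++ skipn (length u) v.
Proof. intros Hu Hv Hl. apply nth_ext with (d:=false) (d':=false).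
  - rewrite length_app, length_skipn; lia.
  - intros i Hi. destruct (Nat.lt_ge_cases i (length u)).
    + rewrite app_nth1 by auto. rewrite <- (Hv i) by lia. apply Hu; lia.
    + rewrite app_nth2 by auto. rewrite nth_skipn. f_equal; lia.
Qed.

Lemma in_cone_app_l u r x : in_cone (u ++ r) x -> in_cone u x.
Proof. intros H i Hi. rewrite H by (rewrite length_app; lia). apply app_nth1; auto. Qed.

Lemma in_cone_app_intro u r x : in_cone u x -> in_cone r (shift (length u) x) -> in_cone (u ++ r) x.
Proof. intros H1 H2 i Hi. rewrite length_app in Hi. destruct (Nat.lt_ge_cases i (length u)).
  - rewrite app_nth1 by auto. auto.
  - rewrite app_nth2 by auto. rewrite <- H2 by lia. unfold shift. f_equal; lia. Qed.

Lemma in_cone_app_shift u r x : in_cone (u ++ r) x -> in_cone r (shift (length u) x).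
Proof. intros H i Hi. unfold shift. rewrite H by (rewrite length_app; lia).
  rewrite app_nth2 by lia. f_equal; lia. Qed.

Lemma rig_ext f w1 w2 u : maps_rigidly f w1 w2 -> maps_rigidly f (w1 ++ u) (w2 ++ u).
Proof. intros H y. rewrite !cat_app. apply H. Qed.

Lemma rig_app f w1 w2 y : maps_rigidly f w1 w2 -> f (cat_word w1 y) = cat_word w2 y.
Proof. auto. Qed.

Definition locrig (f : Cantor -> Cantor) := forall x, exists w1 w2, in_cone w1 x /\ maps_rigidly f w1 w2.

Lemma rig_cont f : locrig f -> continuous_C f.
Proof. intros H x n. destruct (H x) as [w1 [w2 [Hx Hr]]]. exists (length w1 + n).
  intros y Hy. assert (Hyc : in_cone w1 y).
  { intros i Hi. rewrite Hy by lia. apply Hx; auto. }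
  assert (E1 : f y = cat_word w2 (shift (length w1) y)).
  { pose proof (cone_cat w1 y Hyc) as E. rewrite E at 1. apply Hr. }
  assert (E2 : f x = cat_word w2 (shift (length w1) x)).
  { pose proof (cone_cat w1 x Hx) as E. rewrite E at 1. apply Hr. }
  intros i Hi. rewrite E1, E2. unfold cat_word, shift.
  destruct (i <? length w2) eqn:E; auto. apply Hy. apply Nat.ltb_ge in E. lia.
Qed.

Lemma mkV f g : (forall x, g (f x) = x) -> (forall x, f (g x) = x) -> locrig f -> locrig g -> inV f.
Proof. intros H1 H2 H3 H4. split; [|exact H3]. exists g. repeat split; auto using rig_cont. Qed.

Lemma locrig_of_V f : inV f -> locrig f.
Proof. intros [_ H]. exact H. Qed.

Lemma idC_V : inV idC.
Proof. apply mkV with idC; try (intro; reflexivity); intros x; exists [], []; (split;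
  [intros i Hi; simpl in Hi; lia | intro y; reflexivity]). Qed.

Lemma locrig_compose a b : locrig a -> locrig b -> locrig (compose a b).
Proof. intros Ha Hb x. destruct (Hb x) as [w1 [w2 [Hx Hr]]].
  destruct (Ha (b x)) as [u1 [u2 [Hbx Hr2]]].
  pose proof (cone_cat w1 x Hx) as Ex.
  assert (Hbx2 : in_cone w2 (b x)). { rewrite Ex, Hr. apply cat_in_cone. }
  destruct (Nat.le_ge_cases (length u1) (length w2)) as [L|L].
  - pose proof (cone_prefix u1 w2 (b x) Hbx Hbx2 L) as E.
    set (r := skipn (length u1) w2) in *.
    exists w1, (u2 ++ r). split; auto. intro y. unfold compose.
    rewrite Hr, E, cat_app, Hr2, cat_app. reflexivity.
  - pose proof (cone_prefix w2 u1 (b x) Hbx2 Hbx L) as E.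
    set (r := skipn (length w2) u1) in *.
    exists (w1 ++ r), u2. split.
    + apply in_cone_app_intro; auto.
      assert (Hc : in_cone (w2 ++ r) (b x)) by (rewrite <- E; auto).
      apply in_cone_app_shift in Hc. rewrite Ex, Hr in Hc.
      replace (shift (length w2) (cat_word w2 (shift (length w1) x))) with (shift (length w1) x) in Hc; auto.
      apply functional_extensionality; intro i. unfold shift, cat_word.
      destruct (length w2 + i <? length w2) eqn:EE. apply Nat.ltb_lt in EE; lia. f_equal; lia.
    + intro y. unfold compose. rewrite cat_app, Hr, <- cat_app, <- E. apply Hr2.
Qed.

Lemma compose_V a b : inV a -> inV b -> inV (compose a b).
Proof. intros [[ga [Ha1 [Ha2 _]]] Ra] [[gb [Hb1 [Hb2 _]]] Rb].
  apply mkV with (compose gb ga); unfold compose.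
  - intro x. rewrite Ha1. auto.
  - intro x. rewrite Hb2. auto.
  - apply locrig_compose; auto.
  - apply locrig_compose.
    + intro x. destruct (Rb (gb x)) as [w1 [w2 [Hx Hr]]].
      exists w2, w1. split.
      * rewrite <- (Hb2 x). rewrite (cone_cat w1 _ Hx). rewrite Hr. apply cat_in_cone.
      * intro y. rewrite <- (Hr y). apply Hb1.
    + intro x. destruct (Ra (ga x)) as [w1 [w2 [Hx Hr]]].
      exists w2, w1. split.
      * rewrite <- (Ha2 x). rewrite (cone_cat w1 _ Hx). rewrite Hr. apply cat_in_cone.
      * intro y. rewrite <- (Hr y). apply Ha1.
Qed.


Lemma inverse_V s t : inV s -> compose t s = idC -> compose s t = idC -> inV t.
Proof. intros [[g [H1 [H2 _]]] Rs] E1 E2.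
  assert (Et : forall x, t (s x) = x) by (intro x; exact (equal_f E1 x)).
  assert (Es : forall x, s (t x) = x) by (intro x; exact (equal_f E2 x)).
  apply mkV with s; auto.
  - intro x. destruct (Rs (t x)) as [w1 [w2 [Hx Hr]]]. exists w2, w1. split.
    + rewrite <- (Es x). rewrite (cone_cat w1 _ Hx). rewrite Hr. apply cat_in_cone.
    + intro y. rewrite <- (Hr y). apply Et.
Qed.

Section Ev.
Variable Sigma : list (Cantor -> Cantor).

Lemma evals_V w v : (forall s, In s Sigma -> inV s) -> evals Sigma w v -> inV v.
Proof. intros HS H. induction H.
  - apply idC_V.
  - apply compose_V; auto. apply HS, nth_In; auto.
  - apply compose_V; auto. apply inverse_V with (nth i Sigma idC); auto. apply HS, nth_In; auto.
Qed.

Lemma evals_det w v1 v2 : evals Sigma w v1 -> evals Sigma w v2 -> v1 = v2.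
Proof. intros H. revert v2. induction H; intros v2 Hw; inversion Hw; subst.
  - reflexivity.
  - f_equal. auto.
  - match goal with Hq : evals _ w ?v0 |- _ => rewrite (IHevals v0) by auto end. f_equal.
    apply functional_extensionality; intro x.
    match goal with Hq : compose t0 _ = idC |- _ => rename Hq into T1 end.
    match goal with Hq : compose _ t0 = idC |- _ => rename Hq into T2 end.
    pose proof (equal_f T2 x) as B. pose proof (equal_f H1 (t0 x)) as A.
    unfold compose, idC in *. rewrite B in A. auto.
Qed.

Lemma evals_app w1 w2 v1 v2 : evals Sigma w1 v1 -> evals Sigma w2 v2 -> evals Sigma (w1 ++ w2) (compose v1 v2).
Proof. intros H H2. induction H; simpl.
  - exact H2.
  - exact (evals_pos Sigma i (w ++ w2) (compose v v2) H IHevals).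
  - exact (evals_neg Sigma i (w ++ w2) (compose v v2) t H IHevals H1 H3).
Qed.
End Ev.

Fixpoint iterf (k : nat) (f : Cantor -> Cantor) : Cantor -> Cantor :=
  match k with 0 => idC | S k => compose f (iterf k f) end.

Lemma iterf_V k f : inV f -> inV (iterf k f).
Proof. intros H. induction k; simpl. apply idC_V. apply compose_V; auto. Qed.

Definition hasord f d := iterf d f = idC /\ forall k, 0 < k < d -> iterf k f <> idC.

Lemma hasord_uniq f d e : hasord f d -> hasord f e -> 0 < d -> 0 < e -> d = e.
Proof. intros [A1 A2] [B1 B2] Hd He. destruct (Nat.lt_total d e) as [L|[L|L]]; auto.
  - exfalso. apply (B2 d); auto.
  - exfalso. apply (A2 e); auto. Qed.

Lemma phi_id phi : is_autV phi -> phi idC = idC.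
Proof. intros [H1 [H2 [H3 H4]]].
  assert (E : phi idC = compose (phi idC) (phi idC)) by exact (H4 idC idC idC_V idC_V).
  destruct (H1 idC idC_V) as [[g [G1 _]] _].
  apply functional_extensionality; intro x. pose proof (equal_f E x) as Ex. unfold compose in Ex.
  assert (Hg : g (phi idC x) = g (phi idC (phi idC x))) by (rewrite <- Ex; auto).
  rewrite !G1 in Hg. unfold idC. auto. Qed.

Lemma phi_iter phi a k : is_autV phi -> inV a -> phi (iterf k a) = iterf k (phi a).
Proof. intros Hp Ha. induction k; simpl. apply phi_id; auto.
  destruct Hp as [H1 [H2 [H3 H4]]]. rewrite H4; auto using iterf_V. rewrite IHk; auto. Qed.

Lemma aut_hasord a b d : inV a -> aut_equiv a b -> hasord a d -> hasord b d.
Proof. intros Ha [phi [Hp E]] [O1 O2]. subst b. split.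
  - rewrite <- phi_iter, O1 by auto. apply phi_id; auto.
  - intros k Hk C. apply (O2 k Hk). rewrite <- phi_iter in C by auto.
    rewrite <- (phi_id phi Hp) in C. destruct Hp as [H1 [H2 _]].
    apply H2; auto using iterf_V, idC_V. Qed.

Lemma aut_refl a : aut_equiv a a.
Proof. exists (fun f => f). split; [|reflexivity]. split; [|split; [|split]]; auto.
  intros b Hb. exists b; auto. Qed.

Lemma aut_sym a b : inV a -> aut_equiv a b -> aut_equiv b a.
Proof. intros Ha [phi [Hp E]].
  pose (psi := fun y => epsilon (inhabits idC) (fun a => inV a /\ phi a = y)).
  destruct Hp as [H1 [H2 [H3 H4]]].
  assert (Ps : forall y, inV y -> inV (psi y) /\ phi (psi y) = y).
  { intros y Hy. apply epsilon_spec. apply H3; auto. }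
  exists psi. split.
  - split; [|split; [|split]].
    + intros y Hy. apply Ps; auto.
    + intros y1 y2 Hy1 Hy2 Eq. destruct (Ps y1 Hy1) as [_ A]. destruct (Ps y2 Hy2) as [_ B].
      rewrite <- A, <- B, Eq. reflexivity.
    + intros c Hc. exists (phi c). split; auto. destruct (Ps (phi c) (H1 c Hc)) as [A B].
      apply H2; auto.
    + intros y1 y2 Hy1 Hy2. destruct (Ps y1 Hy1) as [A1 B1]. destruct (Ps y2 Hy2) as [A2 B2].
      destruct (Ps (compose y1 y2) (compose_V _ _ Hy1 Hy2)) as [A3 B3].
      apply H2; auto. apply compose_V; auto. rewrite B3, H4, B1, B2; auto.
  - subst b. destruct (Ps (phi a) (H1 a Ha)) as [A B]. apply H2; auto.
Qed.


Definition Xm (x : Cantor) : Cantor :=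
  if x 0 then x else if x 1 then cat_word [false;true;true] (shift 2 x)
  else if x 2 then cat_word [false;true;false] (shift 3 x) else cat_word [false;false] (shift 3 x).
Definition Xi (x : Cantor) : Cantor :=
  if x 0 then x else if x 1 then (if x 2 then cat_word [false;true] (shift 3 x) else cat_word [false;false;true] (shift 3 x))
  else cat_word [false;false;false] (shift 2 x).
Definition Ym (x : Cantor) : Cantor :=
  if x 0 then (if x 1 then cat_word [true] (shift 2 x) else cat_word [false;true;true] (shift 2 x))
  else (if x 1 then cat_word [false;true;false] (shift 2 x) else x).
Definition Yi (x : Cantor) : Cantor :=
  if x 0 then cat_word [true;true] (shift 1 x)
  else if x 1 then (if x 2 then cat_word [true;false] (shift 3 x) else cat_word [false;true] (shift 3 x))
  else x.
Definition Tm (x : Cantor) : Cantor :=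
  if x 0 then x else if x 1 then x else if x 2 then cat_word [false;false;false] (shift 3 x)
  else cat_word [false;false;true] (shift 3 x).
Definition Sm (x : Cantor) : Cantor :=
  if x 1 then x else if x 0 then cat_word [false;false] (shift 2 x) else cat_word [true;false] (shift 2 x).

Ltac solve_inv F G := let x := fresh "x" in let i := fresh "i" in
  intro x; apply functional_extensionality; intro i; unfold F, G, cat_word, shift;
  destruct (x 0) eqn:E0; destruct (x 1) eqn:E1; destruct (x 2) eqn:E2;
  do 4 (simpl; rewrite ?E0, ?E1, ?E2); destruct i as [|[|[|i]]]; simpl; rewrite ?Nat.sub_0_r; congruence.







Lemma XK x : Xi (Xm x) = x. Proof. revert x; solve_inv Xm Xi. Qed.
Lemma XiK x : Xm (Xi x) = x. Proof. revert x; solve_inv Xm Xi. Qed.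
Lemma YK x : Yi (Ym x) = x. Proof. revert x; solve_inv Ym Yi. Qed.
Lemma YiK x : Ym (Yi x) = x. Proof. revert x; solve_inv Ym Yi. Qed.
Lemma TK x : Tm (Tm x) = x. Proof. revert x; solve_inv Tm Tm. Qed.
Lemma SK x : Sm (Sm x) = x. Proof. revert x; solve_inv Sm Sm. Qed.

Ltac rig_tac F := let y := fresh "y" in let i := fresh "i" in intro y; apply functional_extensionality; intro i; unfold F, cat_word, shift; simpl;
  destruct i as [|[|[|[|i]]]]; simpl; rewrite ?Nat.sub_0_r; reflexivity.

Lemma rX1 : maps_rigidly Xm [true] [true]. Proof. rig_tac Xm. Qed.
Lemma rX2 : maps_rigidly Xm [false;true] [false;true;true]. Proof. rig_tac Xm. Qed.
Lemma rX3 : maps_rigidly Xm [false;false;true] [false;true;false]. Proof. rig_tac Xm. Qed.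
Lemma rX4 : maps_rigidly Xm [false;false;false] [false;false]. Proof. rig_tac Xm. Qed.
Lemma rXi1 : maps_rigidly Xi [true] [true]. Proof. rig_tac Xi. Qed.
Lemma rXi2 : maps_rigidly Xi [false;true;true] [false;true]. Proof. rig_tac Xi. Qed.
Lemma rXi3 : maps_rigidly Xi [false;true;false] [false;false;true]. Proof. rig_tac Xi. Qed.
Lemma rXi4 : maps_rigidly Xi [false;false] [false;false;false]. Proof. rig_tac Xi. Qed.
Lemma rY1 : maps_rigidly Ym [true;true] [true]. Proof. rig_tac Ym. Qed.
Lemma rY2 : maps_rigidly Ym [true;false] [false;true;true]. Proof. rig_tac Ym. Qed.
Lemma rY3 : maps_rigidly Ym [false;true] [false;true;false]. Proof. rig_tac Ym. Qed.
Lemma rY4 : maps_rigidly Ym [false;false] [false;false]. Proof. rig_tac Ym. Qed.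
Lemma rYi1 : maps_rigidly Yi [true] [true;true]. Proof. rig_tac Yi. Qed.
Lemma rYi2 : maps_rigidly Yi [false;true;true] [true;false]. Proof. rig_tac Yi. Qed.
Lemma rYi3 : maps_rigidly Yi [false;true;false] [false;true]. Proof. rig_tac Yi. Qed.
Lemma rYi4 : maps_rigidly Yi [false;false] [false;false]. Proof. rig_tac Yi. Qed.
Lemma rT1 : maps_rigidly Tm [true] [true]. Proof. rig_tac Tm. Qed.
Lemma rT2 : maps_rigidly Tm [false;true] [false;true]. Proof. rig_tac Tm. Qed.
Lemma rT3 : maps_rigidly Tm [false;false;true] [false;false;false]. Proof. rig_tac Tm. Qed.
Lemma rT4 : maps_rigidly Tm [false;false;false] [false;false;true]. Proof. rig_tac Tm. Qed.
Lemma rS1 : maps_rigidly Sm [true;true] [true;true]. Proof. rig_tac Sm. Qed.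
Lemma rS2 : maps_rigidly Sm [false;true] [false;true]. Proof. rig_tac Sm. Qed.
Lemma rS3 : maps_rigidly Sm [true;false] [false;false]. Proof. rig_tac Sm. Qed.
Lemma rS4 : maps_rigidly Sm [false;false] [true;false]. Proof. rig_tac Sm. Qed.

Lemma ex_rig f x w1 w2 : maps_rigidly f w1 w2 -> in_cone w1 x ->
  exists w1 w2, in_cone w1 x /\ maps_rigidly f w1 w2.
Proof. eauto. Qed.

Ltac cone_tac := let j := fresh "j" in let Hj := fresh "Hj" in
  intros j Hj; simpl in Hj; destruct j as [|[|[|j]]]; simpl; (assumption || lia).

Ltac locrig_tac L1 L2 L3 L4 := let x := fresh "x" in intro x;
  destruct (x 0) eqn:?; destruct (x 1) eqn:?; destruct (x 2) eqn:?;
  first [ apply (ex_rig _ _ _ _ L1); cone_tac | apply (ex_rig _ _ _ _ L2); cone_tac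
        | apply (ex_rig _ _ _ _ L3); cone_tac | apply (ex_rig _ _ _ _ L4); cone_tac ].

Lemma lX : locrig Xm. Proof. locrig_tac rX1 rX2 rX3 rX4. Qed.
Lemma lXi : locrig Xi. Proof. locrig_tac rXi1 rXi2 rXi3 rXi4. Qed.
Lemma lY : locrig Ym. Proof. locrig_tac rY1 rY2 rY3 rY4. Qed.
Lemma lYi : locrig Yi. Proof. locrig_tac rYi1 rYi2 rYi3 rYi4. Qed.
Lemma lT : locrig Tm. Proof. locrig_tac rT1 rT2 rT3 rT4. Qed.
Lemma lS : locrig Sm. Proof. locrig_tac rS1 rS2 rS3 rS4. Qed.

Lemma VX : inV Xm. Proof. apply mkV with Xi; auto using XK, XiK, lX, lXi. Qed.
Lemma VXi : inV Xi. Proof. apply mkV with Xm; auto using XK, XiK, lX, lXi. Qed.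
Lemma VY : inV Ym. Proof. apply mkV with Yi; auto using YK, YiK, lY, lYi. Qed.
Lemma VYi : inV Yi. Proof. apply mkV with Ym; auto using YK, YiK, lY, lYi. Qed.
Lemma VT : inV Tm. Proof. apply mkV with Tm; auto using TK, lT. Qed.
Lemma VS : inV Sm. Proof. apply mkV with Sm; auto using SK, lS. Qed.


Definition disj (u v : list bool) := forall x, ~ (in_cone u x /\ in_cone v x).

Definition CycB (g : Cantor -> Cantor) (cs : list (list bool)) : Prop :=
  cs <> [] /\
  (forall i j, i < length cs -> j < length cs -> i <> j -> disj (nth i cs []) (nth j cs [])) /\
  (forall i, S i < length cs -> maps_rigidly g (nth i cs []) (nth (S i) cs [])) /\
  maps_rigidly g (nth (length cs - 1) cs []) (nth 0 cs []) /\
  (forall x, (forall c, In c cs -> ~ in_cone c x) -> g x = x).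

Definition Good g cs := CycB g cs /\ nth 0 cs [] = [false;false] /\
  (forall c, In c cs -> exists b r, c = false :: b :: r).

Lemma len_pos {A} (l : list A) : l <> [] -> 0 < length l.
Proof. destruct l; simpl; [congruence|lia]. Qed.

Lemma cyc_iter g cs : CycB g cs -> forall j i y, i < length cs ->
  iterf j g (cat_word (nth i cs []) y) = cat_word (nth ((i+j) mod length cs) cs []) y.
Proof. intros [Hne [Hd [R1 [R2 Hf]]]]. pose proof (len_pos _ Hne) as Hn.
  set (n := length cs) in *.
  induction j; intros i y Hi.
  - simpl. rewrite Nat.add_0_r, Nat.mod_small by auto. reflexivity.
  - simpl. unfold compose. rewrite IHj by auto.
    assert (Hk : (i + j) mod n < n) by (apply Nat.mod_upper_bound; lia).
    set (k := (i + j) mod n) in *.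
    assert (E : (i + S j) mod n = (k + 1) mod n).
    { unfold k. rewrite Nat.Div0.add_mod_idemp_l. f_equal. lia. }
    rewrite E. destruct (Nat.lt_ge_cases (S k) n).
    + rewrite Nat.mod_small by lia. rewrite Nat.add_1_r. apply R1; auto.
    + assert (k = n - 1) by lia. replace (k + 1) with n by lia. rewrite Nat.Div0.mod_same.
      subst k. rewrite H0. apply R2.
Qed.

Lemma cyc_ord g cs : CycB g cs -> hasord g (length cs).
Proof. intros C. pose proof C as [Hne [Hd [R1 [R2 Hf]]]]. pose proof (len_pos _ Hne) as Hn. split.
  - apply functional_extensionality; intro x.
    destruct (classic (exists c, In c cs /\ in_cone c x)) as [[c [Hc Hx]]|N].
    + destruct (In_nth _ _ [] Hc) as [i [Hi E]]. subst c.
      rewrite (cone_cat _ _ Hx). rewrite cyc_iter by auto.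
      replace ((i + length cs) mod length cs) with i. reflexivity.
      replace (i + length cs) with (i + 1 * length cs) by lia.
      rewrite Nat.Div0.mod_add. symmetry. apply Nat.mod_small; auto.
    + assert (Fx : g x = x). { apply Hf. intros c Hc Hx. apply N; eauto. }
      generalize (length cs). intro k. induction k; simpl; auto. unfold compose. rewrite IHk. auto.
  - intros k Hk E. set (y := fun _ : nat => false).
    pose proof (cyc_iter g cs C k 0 y Hn) as I. rewrite E in I. simpl in I.
    rewrite Nat.mod_small in I by lia. unfold idC in I.
    apply (Hd 0 k Hn ltac:(lia) ltac:(lia) (cat_word (nth 0 cs []) y)). split.
    + apply cat_in_cone.
    + rewrite I. apply cat_in_cone.
Qed.

Lemma nth_map_d {A B} (f : A -> B) l i d d' : i < length l -> nth i (map f l) d' = f (nth i l d).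
Proof. intros H. rewrite (nth_indep _ _ (f d)) by (rewrite length_map; auto). apply map_nth. Qed.

Lemma conj_cyc g cs Z Zi f : CycB g cs -> (forall x, Zi (Z x) = x) -> (forall x, Z (Zi x) = x) ->
  (forall c, In c cs -> maps_rigidly Z c (f c)) -> CycB (compose Z (compose g Zi)) (map f cs).
Proof. intros [Hne [Hd [R1 [R2 Hf]]]] K1 K2 HZ.
  assert (Hi : forall c y, In c cs -> Zi (cat_word (f c) y) = cat_word c y).
  { intros c y Hc. rewrite <- (HZ c Hc y). apply K1. }
  assert (Hin : forall i, i < length cs -> In (nth i cs []) cs) by (intros; apply nth_In; auto).
  pose proof (len_pos _ Hne) as Hn.
  split; [|split; [|split; [|split]]]; rewrite ?length_map.
  - destruct cs; simpl; congruence.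
  - intros i j Hi' Hj' Hij x [A B]. rewrite (nth_map_d f cs _ []) in A by auto. rewrite (nth_map_d f cs _ []) in B by auto.
    apply (Hd i j Hi' Hj' Hij (Zi x)). split.
    + rewrite (cone_cat _ _ A), Hi by auto. apply cat_in_cone.
    + rewrite (cone_cat _ _ B), Hi by auto. apply cat_in_cone.
  - intros i Hi' y. rewrite !(nth_map_d f cs _ []) by lia. unfold compose.
    rewrite Hi by (apply Hin; lia). rewrite R1 by auto. apply HZ, Hin; auto.
  - intros y. rewrite !(nth_map_d f cs _ []) by lia. unfold compose.
    rewrite Hi by (apply Hin; lia). rewrite R2. apply HZ, Hin; auto.
  - intros x Hx. unfold compose. rewrite Hf. apply K2.
    intros c Hc Hcx. apply (Hx (f c)). apply in_map; auto.
    rewrite <- (K2 x). rewrite (cone_cat _ _ Hcx). rewrite HZ by auto. apply cat_in_cone.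
Qed.


Lemma cone_ff x : in_cone [false;false] x <-> x 0 = false /\ x 1 = false.
Proof. split.
  - intros H. split; apply H; simpl; lia.
  - intros [A B] j Hj. simpl in Hj. destruct j as [|[|j]]; simpl; auto; lia. Qed.

Lemma Tm_fix x : ~ in_cone [false;false] x -> Tm x = x.
Proof. intros H. unfold Tm. destruct (x 0) eqn:E0; auto. destruct (x 1) eqn:E1; auto.
  exfalso. apply H, cone_ff; auto. Qed.

Lemma Sm_fix x : x 1 = true -> Sm x = x.
Proof. intros H. unfold Sm. rewrite H. auto. Qed.

Lemma cone_last c b x : in_cone (c ++ [b]) x -> x (length c) = b.
Proof. intros H. rewrite H by (rewrite length_app; simpl; lia). rewrite app_nth2 by lia.
  rewrite Nat.sub_diag. reflexivity. Qed.

Lemma cone_ext_intro c x : in_cone c x -> in_cone (c ++ [x (length c)]) x.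
Proof. intros H. apply in_cone_app_intro; auto. intros j Hj. simpl in Hj.
  destruct j; [|lia]. unfold shift. simpl. f_equal; lia. Qed.

Section Steps.
Variable g : Cantor -> Cantor.
Variable cs : list (list bool).
Hypothesis G : Good g cs.

Let n := length cs.

Lemma nthL1 k : k < n -> nth k (map (fun c => c ++ [false]) cs ++ map (fun c => c ++ [true]) cs) [] = nth k cs [] ++ [false].
Proof. intros H. rewrite app_nth1 by (rewrite length_map; auto). apply (nth_map_d (fun c => c ++ [false])); auto. Qed.

Lemma nthL2 k : n <= k < n + n -> nth k (map (fun c => c ++ [false]) cs ++ map (fun c => c ++ [true]) cs) [] = nth (k - n) cs [] ++ [true].
Proof. intros H. rewrite app_nth2 by (rewrite length_map; unfold n in H; lia). rewrite length_map.
  apply (nth_map_d (fun c => c ++ [true])). unfold n in H; lia. Qed.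

Lemma cycD : CycB (compose Tm g) (map (fun c => c ++ [false]) cs ++ map (fun c => c ++ [true]) cs).
Proof. destruct G as [[Hne [Hd [R1 [R2 Hf]]]] [H0 Hsh]].
  pose proof (len_pos _ Hne) as Hn. fold n in Hn, R2, Hd, R1.
  assert (Tfix : forall i x, i < n -> i <> 0 -> in_cone (nth i cs []) x -> Tm x = x).
  { intros i x Hi Hi0 Hx. apply Tm_fix. intro C. rewrite <- H0 in C. apply (Hd i 0 Hi Hn Hi0 x); auto. }
  assert (Dext : forall i j b b', i < n -> j < n -> (i <> j \/ b <> b') -> disj (nth i cs [] ++ [b]) (nth j cs [] ++ [b'])).
  { intros i j b b' Hi Hj [Hij|Hb] x [A B].
    - apply (Hd i j Hi Hj Hij x). split; eapply in_cone_app_l; eauto.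
    - destruct (Nat.eq_dec i j). subst j. apply cone_last in A. apply cone_last in B. congruence.
      apply (Hd i j Hi Hj n0 x). split; eapply in_cone_app_l; eauto. }
  set (L := map (fun c => c ++ [false]) cs ++ map (fun c => c ++ [true]) cs).
  assert (HL : length L = n + n) by (unfold L; rewrite length_app, !length_map; auto).
  split; [|split; [|split; [|split]]]; rewrite ?HL.
  - intro E. apply (f_equal (@length _)) in E. rewrite HL in E. simpl in E. lia.
  - intros k k' Hk Hk' Hkk'. unfold L.
    destruct (Nat.lt_ge_cases k n); destruct (Nat.lt_ge_cases k' n).
    + rewrite (nthL1 k), (nthL1 k') by lia. apply Dext; lia.
    + rewrite (nthL1 k), (nthL2 k') by lia. apply Dext; try lia; try (right; discriminate).
    + rewrite (nthL2 k), (nthL1 k') by lia. apply Dext; try lia; try (right; discriminate).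
    + rewrite (nthL2 k), (nthL2 k') by lia. apply Dext; lia.
  - intros k Hk y. unfold L, compose. destruct (Nat.lt_ge_cases k n).
    + rewrite nthL1 by lia. rewrite cat_app.
      destruct (Nat.lt_ge_cases (S k) n).
      * rewrite nthL1 by lia. rewrite R1 by auto. rewrite <- cat_app. apply (Tfix (S k)); auto.
        apply in_cone_app_l with [false]. apply cat_in_cone.
      * rewrite nthL2 by lia. replace k with (n - 1) by lia. rewrite R2, H0.
        replace (S (n - 1) - n) with 0 by lia. rewrite H0. exact (rT4 y).
    + rewrite !nthL2 by lia. rewrite cat_app. replace (S k - n) with (S (k - n)) by lia.
      rewrite R1 by lia. rewrite <- cat_app. apply (Tfix (S (k - n))); try lia.
      apply in_cone_app_l with [true]. apply cat_in_cone.
  - intro y. unfold L, compose. rewrite nthL2 by lia. rewrite nthL1 by lia.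
    replace (n + n - 1 - n) with (n - 1) by lia. rewrite cat_app, R2, H0. exact (rT3 y).
  - intros x Hx. unfold compose.
    assert (Nx : forall c, In c cs -> ~ in_cone c x).
    { intros c Hc Hcx. apply (Hx (c ++ [x (length c)])); [|apply cone_ext_intro; auto].
      unfold L. apply in_or_app. destruct (x (length c)); [right|left]; apply in_map_iff; eauto. }
    rewrite Hf by auto. apply Tm_fix. rewrite <- H0. apply Nx. apply nth_In; auto.
Qed.

Lemma cycS : CycB (compose Sm g) (cs ++ [[true;false]]).
Proof. destruct G as [[Hne [Hd [R1 [R2 Hf]]]] [H0 Hsh]].
  pose proof (len_pos _ Hne) as Hn. fold n in Hn, R2, Hd, R1.
  assert (Sfix : forall i x, i < n -> i <> 0 -> in_cone (nth i cs []) x -> Sm x = x).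
  { intros i x Hi Hi0 Hx. apply Sm_fix.
    destruct (Hsh (nth i cs [])) as [b [r E]]. apply nth_In; auto.
    assert (x 0 = false) by (rewrite (Hx 0) by (rewrite E; simpl; lia); rewrite E; auto).
    destruct (x 1) eqn:E1; auto. exfalso. apply (Hd i 0 Hi Hn Hi0 x). split; auto.
    rewrite H0. apply cone_ff; auto. }
  assert (Nin : forall x c, In c cs -> in_cone c x -> x 0 = false).
  { intros x c Hc Hx. destruct (Hsh c Hc) as [b [r E]]. subst c. apply (Hx 0). simpl; lia. }
  assert (gfix10 : forall y, g (cat_word [true;false] y) = cat_word [true;false] y).
  { intro y. apply Hf. intros c Hc Hx. apply Nin in Hx; auto. discriminate. }
  assert (N1 : forall k, k < n -> nth k (cs ++ [[true;false]]) [] = nth k cs []) by (intros; apply app_nth1; auto).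
  assert (N2 : nth n (cs ++ [[true;false]]) [] = [true;false]).
  { rewrite app_nth2 by (unfold n; lia). unfold n. rewrite Nat.sub_diag. auto. }
  assert (HL : length (cs ++ [[true;false]]) = S n) by (rewrite length_app; simpl; unfold n; lia).
  split; [|split; [|split; [|split]]]; rewrite ?HL.
  - destruct cs; simpl; congruence.
  - intros k k' Hk Hk' Hkk' x [A B].
    destruct (Nat.lt_ge_cases k n); destruct (Nat.lt_ge_cases k' n).
    + rewrite N1 in A, B by auto. apply (Hd k k' H H1 Hkk' x); auto.
    + replace k' with n in B by lia. rewrite N1 in A by auto. rewrite N2 in B.
      apply Nin in A; [|apply nth_In; auto]. rewrite (B 0) in A by (simpl; lia). discriminate.
    + replace k with n in A by lia. rewrite N1 in B by auto. rewrite N2 in A.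
      apply Nin in B; [|apply nth_In; auto]. rewrite (A 0) in B by (simpl; lia). discriminate.
    + lia.
  - intros k Hk y. unfold compose. rewrite N1 by lia. destruct (Nat.lt_ge_cases (S k) n).
    + rewrite N1 by auto. rewrite R1 by auto. apply (Sfix (S k)); auto. apply cat_in_cone.
    + replace (S k) with n by lia. rewrite N2. replace k with (n - 1) by lia. rewrite R2, H0.
      exact (rS4 y).
  - intro y. unfold compose. replace (S n - 1) with n by lia. rewrite N2, gfix10.
    rewrite N1 by auto. rewrite H0. exact (rS3 y).
  - intros x Hx. unfold compose.
    rewrite Hf by (intros c Hc; apply Hx; apply in_or_app; auto).
    apply Sm_fix. destruct (x 1) eqn:E1; auto. exfalso. destruct (x 0) eqn:E0.
    + apply (Hx [true;false]). apply in_or_app; simpl; auto.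
      intros j Hj; simpl in Hj; destruct j as [|[|j]]; simpl; auto; lia.
    + apply (Hx (nth 0 cs [])). apply in_or_app; left; apply nth_In; auto.
      rewrite H0. apply cone_ff; auto.
Qed.
End Steps.


Definition fX (c : list bool) : list bool :=
  match c with
  | false :: false :: false :: u => false :: false :: u
  | false :: false :: true :: u => false :: true :: false :: u
  | false :: true :: u => false :: true :: true :: u
  | _ => c end.

Definition fY (c : list bool) : list bool :=
  match c with
  | false :: false :: u => c
  | false :: true :: u => false :: true :: false :: u
  | true :: false :: u => false :: true :: true :: u
  | true :: true :: u => true :: u
  | _ => c end.

Lemma fX_ok c : (exists b r, c = false :: b :: r) -> 3 <= length c ->
  maps_rigidly Xm c (fX c) /\ exists b r, fX c = false :: b :: r.
Proof. intros [b [r E]] L. subst c. destruct b.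
  - split. exact (rig_ext _ _ _ r rX2). simpl; eauto.
  - destruct r as [|c u]; simpl in L; [lia|]. destruct c.
    + split. exact (rig_ext _ _ _ u rX3). simpl; eauto.
    + split. exact (rig_ext _ _ _ u rX4). simpl; eauto.
Qed.

Lemma fY_ok c : (exists b r, c = false :: b :: r) \/ c = [true;false] ->
  maps_rigidly Ym c (fY c) /\ exists b r, fY c = false :: b :: r.
Proof. intros [[b [r E]]|E]; subst c.
  - destruct b.
    + split. exact (rig_ext _ _ _ r rY3). simpl; eauto.
    + split. exact (rig_ext _ _ _ r rY4). simpl; eauto.
  - split. exact (rig_ext _ _ _ [] rY2). simpl; eauto.
Qed.

Definition gD g := compose Xm (compose (compose Tm g) Xi).
Definition gS g := compose Ym (compose (compose Sm g) Yi).

Lemma goodD g cs : Good g cs -> Good (gD g) (map fX (map (fun c => c ++ [false]) cs ++ map (fun c => c ++ [true]) cs)).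
Proof. intros G. pose proof G as [[Hne _] [H0 Hsh]].
  assert (Hc : forall c, In c (map (fun c => c ++ [false]) cs ++ map (fun c => c ++ [true]) cs) ->
     (exists b r, c = false :: b :: r) /\ 3 <= length c).
  { intros c Hc. apply in_app_or in Hc. destruct Hc as [Hc|Hc]; apply in_map_iff in Hc;
    destruct Hc as [w [E Hw]]; subst c; destruct (Hsh w Hw) as [b [r E]]; subst w;
    (split; [eexists; eexists; reflexivity | simpl; rewrite length_app; simpl; lia]). }
  split; [|split].
  - apply conj_cyc. apply cycD; auto. apply XK. apply XiK.
    intros c Hin. apply fX_ok; apply Hc; auto.
  - destruct cs as [|c0 cs']; [congruence|]. simpl in H0 |- *. rewrite H0. reflexivity.
  - intros c Hin. apply in_map_iff in Hin. destruct Hin as [c' [E Hin]]. subst c.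
    apply fX_ok; apply Hc; auto.
Qed.

Lemma goodS g cs : Good g cs -> Good (gS g) (map fY (cs ++ [[true;false]])).
Proof. intros G. pose proof G as [[Hne _] [H0 Hsh]].
  assert (Hc : forall c, In c (cs ++ [[true;false]]) -> (exists b r, c = false :: b :: r) \/ c = [true;false]).
  { intros c Hc. apply in_app_or in Hc. destruct Hc as [Hc|[Hc|[]]]; auto. }
  split; [|split].
  - apply conj_cyc. apply cycS; auto. apply YK. apply YiK.
    intros c Hin. apply fY_ok; apply Hc; auto.
  - destruct cs as [|c0 cs']; [congruence|]. simpl in H0 |- *. rewrite H0. reflexivity.
  - intros c Hin. apply in_map_iff in Hin. destruct Hin as [c' [E Hin]]. subst c.
    apply fY_ok; apply Hc; auto.
Qed.

Lemma good_base : Good idC [[false;false]].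
Proof. split; [|split].
  - split; [|split; [|split; [|split]]].
    + discriminate.
    + intros i j Hi Hj Hij. simpl in *. lia.
    + intros i Hi. simpl in Hi. lia.
    + intro y. reflexivity.
    + intros x _. reflexivity.
  - reflexivity.
  - intros c [E|[]]. subst. eauto.
Qed.


Definition letters (m : nat) : list (nat * bool) :=
  flat_map (fun i => [(i, true); (i, false)]) (seq 0 m).

Fixpoint words (m n : nat) : list (list (nat * bool)) :=
  match n with
  | 0 => [[]]
  | S n => [] :: flat_map (fun l => map (cons l) (words m n)) (letters m)
  end.

Lemma flat_map_len {A B} (f : A -> list B) l k : (forall x, length (f x) = k) -> length (flat_map f l) = k * length l.
Proof. intros H. induction l; simpl. lia. rewrite length_app, H, IHl. lia. Qed.

Lemma words_len m n : length (words m n) <= (2 * m + 1) ^ n.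
Proof. induction n. simpl; lia. cbn [words length].
  rewrite (flat_map_len _ _ (length (words m n))) by (intro; apply length_map).
  unfold letters. rewrite (flat_map_len _ _ 2) by reflexivity. rewrite length_seq.
  assert (0 < (2 * m + 1) ^ n) by (apply Nat.neq_0_lt_0, Nat.pow_nonzero; lia).
  assert (length (words m n) * (2 * m) <= (2 * m + 1) ^ n * (2 * m)) by (apply Nat.mul_le_mono_r; auto).
  rewrite Nat.pow_succ_r'. nia.
Qed.

Lemma pow_bound m n : (2 * m + 1) ^ n <= 2 ^ ((2 * m + 1) * n).
Proof. rewrite Nat.pow_mul_r. apply Nat.pow_le_mono_l. apply Nat.lt_le_incl, Nat.pow_gt_lin_r. lia. Qed.

Section Main.
Variable Sigma : list (Cantor -> Cantor).
Hypothesis HG : generatesV Sigma.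

Lemma HS : forall s, In s Sigma -> inV s.
Proof. apply HG. Qed.

Lemma words_complete w v n : evals Sigma w v -> length w <= n -> In w (words (length Sigma) n).
Proof. intros H. revert n. induction H; intros n Hn.
  - destruct n; simpl; auto.
  - destruct n; simpl in Hn; [lia|]. simpl. right. apply in_flat_map. exists (i, true). split.
    + unfold letters. apply in_flat_map. exists i. split. apply in_seq; lia. simpl; auto.
    + apply in_map. apply IHevals. lia.
  - destruct n; simpl in Hn; [lia|]. simpl. right. apply in_flat_map. exists (i, false). split.
    + unfold letters. apply in_flat_map. exists i. split. apply in_seq; lia. simpl; auto.
    + apply in_map. apply IHevals. lia.
Qed.

Definition ballB n := map (fun w => epsilon (inhabits idC) (evals Sigma w)) (words (length Sigma) n).

Lemma ballB_complete n v : in_ball Sigma n v -> In v (ballB n).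
Proof. intros [w [Hl Hw]]. unfold ballB. apply in_map_iff. exists w. split.
  - apply (evals_det Sigma w). apply epsilon_spec. eauto. auto.
  - eapply words_complete; eauto. Qed.

Lemma ball_V n v : in_ball Sigma n v -> inV v.
Proof. intros [w [_ Hw]]. eapply evals_V; eauto. apply HS. Qed.

Definition Rne a b := ~ aut_equiv a b /\ ~ aut_equiv b a.

Lemma reps (P : (Cantor -> Cantor) -> Prop) (B : list (Cantor -> Cantor)) :
  (forall a, P a -> inV a) -> exists L, (forall a, In a L -> P a) /\ ForallOrdPairs Rne L /\
  (forall v, P v -> In v B -> exists a, In a L /\ aut_equiv v a).
Proof. intros HP. induction B as [|x B IH].
  - exists []. split; [|split]. intros a []. constructor. intros v _ [].
  - destruct IH as [L [H1 [H2 H3]]].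
    destruct (classic (P x /\ ~ exists a, In a L /\ aut_equiv x a)) as [[Px N]|N].
    + exists (x :: L). split; [|split].
      * intros a [E|Ha]; subst; auto.
      * constructor; auto. apply Forall_forall. intros a Ha. split.
        -- intro C. apply N. eauto.
        -- intro C. apply N. exists a. split; auto. apply aut_sym; auto.
      * intros v Pv [E|Hv]. subst. exists v. split; simpl; auto. apply aut_refl.
        destruct (H3 v Pv Hv) as [a [Ha Ea]]. exists a. simpl; auto.
    + exists L. split; [|split]; auto. intros v Pv [E|Hv]; auto. subst.
      apply NNPP. intro C. apply N. split; auto.
Qed.

Lemma fop_nth L : ForallOrdPairs Rne L -> forall i j, i < length L -> j < length L -> i <> j ->
  ~ aut_equiv (nth i L idC) (nth j L idC).
Proof. intros H. assert (K : forall i j, i < j -> j < length L -> Rne (nth i L idC) (nth j L idC)).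
  { induction H; intros i j Hij Hj; simpl in Hj. lia.
    destruct i; destruct j; try lia.
    - simpl. rewrite Forall_forall in H. apply H. apply nth_In. lia.
    - simpl. apply IHForallOrdPairs; lia. }
  intros i j Hi Hj Hij. destruct (Nat.lt_gt_cases i j) as [[L1|L1] _]; auto.
  - exact (proj1 (K i j L1 Hj)).
  - exact (proj2 (K j i L1 Hi)).
Qed.

Lemma oc_exists n : exists k, orbit_count Sigma n k.
Proof. destruct (reps (in_ball Sigma n) (ballB n) (ball_V n)) as [L [H1 [H2 H3]]].
  exists (length L), L. split; [|split; [|split]]; auto.
  - apply fop_nth; auto.
  - intros v Hv. apply H3; auto. apply ballB_complete; auto.
Qed.

Lemma ag_spec n : orbit_count Sigma n (aut_growth Sigma n).
Proof. unfold aut_growth. apply epsilon_spec. apply oc_exists. Qed.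

Lemma upper n : aut_growth Sigma n <= (2 * length Sigma + 1) ^ n.
Proof. destruct (ag_spec n) as [L [E [H1 [H2 H3]]]]. rewrite <- E.
  eapply Nat.le_trans; [|apply (words_len (length Sigma) n)].
  replace (length (words (length Sigma) n)) with (length (ballB n)) by (unfold ballB; apply length_map).
  apply NoDup_incl_length.
  - apply (NoDup_nth L idC). intros i j Hi Hj Eq. destruct (Nat.eq_dec i j); auto.
    exfalso. apply (H2 i j Hi Hj n0). rewrite Eq. apply aut_refl.
  - intros a Ha. apply ballB_complete; auto.
Qed.

Lemma getw v : inV v -> exists w, evals Sigma w v.
Proof. apply HG. Qed.

Lemma lower : exists K, forall n d, 1 <= d <= 2 ^ n -> exists g w cs,
  evals Sigma w g /\ length w <= K * n /\ Good g cs /\ length cs = d.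
Proof.
  destruct (getw _ VX) as [wX HX]. destruct (getw _ VXi) as [wXi HXi].
  destruct (getw _ VT) as [wT HT]. destruct (getw _ VY) as [wY HY].
  destruct (getw _ VYi) as [wYi HYi]. destruct (getw _ VS) as [wS HSm].
  exists (length wX + length wXi + length wT + length wY + length wYi + length wS).
  set (K := length wX + length wXi + length wT + length wY + length wYi + length wS).
  induction n; intros d Hd.
  - simpl in Hd. exists idC, [], [[false;false]]. split; [constructor|]. split; [simpl; lia|].
    split. apply good_base. simpl; lia.
  - destruct (Nat.le_gt_cases d (2 ^ n)).
    + destruct (IHn d) as [g [w [cs [A [B [C D]]]]]]. lia. exists g, w, cs. split; [auto|split; [nia|split; auto]].
    + simpl in Hd. destruct (Nat.Even_or_Odd d) as [[e He]|[e He]].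
      * destruct (IHn e) as [g [w [cs [A [B [C D]]]]]]. lia.
        eexists (gD g), (wX ++ (wT ++ (w ++ wXi))), _. split; [|split; [|split]].
        -- exact (evals_app Sigma _ _ _ _ HX (evals_app Sigma _ _ _ _ HT (evals_app Sigma _ _ _ _ A HXi))).
        -- rewrite !length_app. nia.
        -- apply goodD; eauto.
        -- rewrite length_map, length_app, !length_map. lia.
      * destruct (IHn e) as [g [w [cs [A [B [C D]]]]]]. lia.
        eexists (gS (gD g)), (wY ++ (wS ++ ((wX ++ (wT ++ (w ++ wXi))) ++ wYi))), _. split; [|split; [|split]].
        -- exact (evals_app Sigma _ _ _ _ HY (evals_app Sigma _ _ _ _ HSm (evals_app Sigma _ _ _ _
             (evals_app Sigma _ _ _ _ HX (evals_app Sigma _ _ _ _ HT (evals_app Sigma _ _ _ _ A HXi))) HYi))).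
        -- rewrite !length_app. nia.
        -- apply goodS. apply goodD; eauto.
        -- rewrite length_map, length_app, length_map, length_app, !length_map. simpl. lia.
Qed.

Lemma count_lower K n : (forall d, 1 <= d <= 2 ^ n -> exists g w cs,
  evals Sigma w g /\ length w <= K * n /\ Good g cs /\ length cs = d) ->
  2 ^ n <= aut_growth Sigma ((K + 1) * n + (K + 1)).
Proof. intros HK. set (r := (K + 1) * n + (K + 1)).
  destruct (ag_spec r) as [L [E [H1 [H2 H3]]]]. rewrite <- E.
  assert (M : forall N, N <= 2 ^ n -> exists Sl, NoDup Sl /\ incl Sl L /\ length Sl = N /\
     forall a, In a Sl -> exists d, 1 <= d <= N /\ hasord a d).
  { induction N; intros HN.
    - exists []. split; [constructor|]. split; [intros a []|]. split; auto. intros a [].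
    - destruct IHN as [Sl [A [B [C D]]]]. lia.
      destruct (HK (S N)) as [g [w [cs [G1 [G2 [G3 G4]]]]]]. lia.
      assert (Hb : in_ball Sigma r g) by (exists w; split; auto; unfold r; nia).
      destruct (H3 g Hb) as [a [Ha Ea]].
      assert (Oa : hasord a (S N)).
      { apply aut_hasord with g; auto. eapply ball_V; eauto. rewrite <- G4. apply cyc_ord. apply G3. }
      exists (a :: Sl). split; [|split; [|split]].
      + constructor; auto. intro Hin. destruct (D a Hin) as [d' [Hd' Od']].
        assert (d' = S N) by (apply (hasord_uniq a); auto; lia). lia.
      + intros b [Eb|Hb']; [rewrite <- Eb; auto|auto].
      + simpl; lia.
      + intros b [Eb|Hb']. rewrite <- Eb. exists (S N); split; auto; lia.
        destruct (D b Hb') as [d' [Hd' Od']]. exists d'; split; auto; lia. }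
  destruct (M (2 ^ n) (le_n _)) as [Sl [A [B [C _]]]]. rewrite <- C. apply NoDup_incl_length; auto.
Qed.

End Main.

Theorem mainTheorem7 : forall Sigma : list (Cantor -> Cantor),
  generatesV Sigma -> exponential (aut_growth Sigma).
Proof. intros Sigma HG. split.
  - exists (2 * length Sigma + 1). split; [lia|]. intro n.
    eapply Nat.le_trans; [apply upper; auto|].
    eapply Nat.le_trans; [apply pow_bound|].
    assert (2 ^ ((2 * length Sigma + 1) * n) <= 2 ^ ((2 * length Sigma + 1) * n + (2 * length Sigma + 1)))
      by (apply Nat.pow_le_mono_r; lia).
    nia.
  - destruct (lower Sigma HG) as [K HK]. exists (K + 1). split; [lia|]. intro n.
    pose proof (count_lower Sigma HG K n (HK n)). nia.
Qed.
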